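(* Let $(\Gamma,\lambda)$ be a tree plan. The complete $\mathcal{L}_\Gamma$-theory $\mathrm{Th}(\Gamma(\omega))$ is $\aleph_0$-categorical and has quantifier elimination.
   Context: Tree plans: a tree plan is a pair $(\Gamma,\lambda)$ where $\Gamma\subseteq\omega^{<\omega}$ is a finite set of finite sequences containing the empty sequence $\langle\rangle$ and closed under initial segments, and $\lambda:\Gamma\to\{1,\infty\}$ with $\lambda(\langle\rangle)=1$. $\Gamma(\omega)$ is the set of finite sequences $\langle(i_0,t_0),\dots,(i_n,t_n)\rangle$ (including the empty one) such that $\langle i_0,\dots,i_n\rangle\in\Gamma$ and for each $k\le n$: $t_k=\star$ (a fixed symbol not in $\omega$) if $\lambda(\langle i_0,\dots,i_k\rangle)=1$, and $t_k\in\omega$ if $\lambda(\langle i_0,\dots,i_k\rangle)=\infty$. It is a tree under the initial-segment order, viewed as a structure in the language $\mathcal{L}_t$ with $\le$, root constant $\varepsilon$ (the empty sequence), meet $\sqcap$ (longest common initial segment) and $\mathtt{pred}$ (delete the last entry; $\mathtt{pred}(\varepsilon)=\varepsilon$). The map $\pi:\Gamma(\omega)\to\Gamma$ sends $\langle(i_0,t_0),\dots,(i_n,t_n)\rangle$ to $\langle i_0,\dots,i_n\rangle$. The language $\mathcal{L}_\Gamma$ is $\mathcal{L}_t$ together with unary predicates $P_\sigma$ ($\sigma\in\Gamma$), interpreted by $P_\sigma=\pi^{-1}(\sigma)$. *)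

(* Defs.v *)
From mathcomp Require Import all_boot zify.
Set Implicit Arguments. Unset Strict Implicit. Unset Printing Implicit Defensive.

Inductive lab := One | Inf.

(* A tree plan: Gamma is a finite set (given as a list) of finite sequences
   of naturals, containing the empty sequence, closed under initial
   segments; lam : Gamma -> {1,oo} (extended arbitrarily outside Gamma,
   values there are irrelevant), with lam <> = 1. *)
Definition tree_plan (G : seq (seq nat)) (lam : seq nat -> lab) : Prop :=
  [/\ [::] \in G, (forall (s : seq nat) (n : nat), s \in G -> take n s \in G)
    & lam [::] = One].

(* Elements of Gamma(omega): sequences of pairs (i_k, t_k), with t_k = None
   playing the role of the symbol star and t_k = Some m, m in omega. *)
Definition okpair (lam : seq nat -> lab) (x : seq (nat * option nat)) (k : nat)
  : bool :=
  match (nth (0, None) x k).2 with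
  | None => if lam (take k.+1 (map fst x)) is One then true else false
  | Some _ => if lam (take k.+1 (map fst x)) is Inf then true else false
  end.

Definition valid (G : seq (seq nat)) (lam : seq nat -> lab)
  (x : seq (nat * option nat)) : bool :=
  (map fst x \in G) && all (okpair lam x) (iota 0 (size x)).

Fixpoint lcp (T : eqType) (x y : seq T) : seq T :=
  match x, y with
  | a :: x', b :: y' => if a == b then a :: lcp x' y' else [::]
  | _, _ => [::]
  end.

Lemma lcp_take (T : eqType) (x y : seq T) : lcp x y = take (size (lcp x y)) x.
Proof.
elim: x y => [|a x IH] [|b y] //=.
case: eqP => // _ /=; by rewrite -IH.
Qed.

Lemma valid_take G lam x n :
  tree_plan G lam -> valid G lam x -> valid G lam (take n x).
Proof.
case=> _ Hpre _ /andP[Hx Hall]; apply/andP; split.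
  by rewrite map_take; apply: Hpre.
apply/allP=> k; rewrite mem_iota add0n size_take => /andP[_ hk].
have [hkn hks] : k < n /\ k < size x.
  by move: hk; case: (ltnP n (size x)) => H1 H2; split; lia.
rewrite /okpair nth_take // -map_take take_takel //.
have := allP Hall k; rewrite mem_iota add0n hks /okpair map_take; exact.
Qed.

Section Gomega.
Variables (G : seq (seq nat)) (lam : seq nat -> lab) (HG : tree_plan G lam).

Definition gcar := {x : seq (nat * option nat) | valid G lam x}.

Lemma valid_nil : valid G lam [::].
Proof. by case: HG => H _ _; rewrite /valid /= H. Qed.

Lemma valid_lcp (x y : gcar) : valid G lam (lcp (sval x) (sval y)).
Proof. rewrite lcp_take; exact: (valid_take _ HG (svalP x)). Qed.

Lemma valid_pred (x : gcar) : valid G lam (take (size (sval x)).-1 (sval x)).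
Proof. exact: (valid_take _ HG (svalP x)). Qed.

Definition g_eps : gcar := exist _ [::] valid_nil.
Definition g_meet (x y : gcar) : gcar := exist _ (lcp (sval x) (sval y)) (valid_lcp x y).
Definition g_pred (x : gcar) : gcar := exist _ (take (size (sval x)).-1 (sval x)) (valid_pred x).
Definition g_le (x y : gcar) : Prop := prefix (sval x) (sval y).
Definition g_P (s : {s : seq nat | s \in G}) (x : gcar) : Prop :=
  map fst (sval x) = sval s.
End Gomega.

(* L_Gamma-structures: <=, constant eps, meet, pred, unary P_sigma
   (sigma in Gamma).  Equality is the equality of the carrier. *)
Record Lstr (G : seq (seq nat)) := {
  car :> Type;
  s_eps : car;
  s_meet : car -> car -> car;
  s_pred : car -> car;
  s_le : car -> car -> Prop;
  s_P : {s : seq nat | s \in G} -> car -> Prop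
}.

Definition Gomega (G : seq (seq nat)) (lam : seq nat -> lab)
  (HG : tree_plan G lam) : Lstr G :=
  {| car := gcar G lam;
     s_eps := g_eps HG;
     s_meet := @g_meet G lam HG;
     s_pred := @g_pred G lam HG;
     s_le := @g_le G lam;
     s_P := @g_P G lam |}.

Inductive term :=
| TVar of nat
| TEps
| TMeet of term & term
| TPred of term.

Inductive formula (G : seq (seq nat)) :=
| FFalse
| FEq of term & term
| FLe of term & term
| FP of {s : seq nat | s \in G} & term
| FNot of formula G
| FAnd of formula G & formula G
| FOr of formula G & formula G
| FImp of formula G & formula G
| FAll of nat & formula G
| FEx of nat & formula G.
Arguments FFalse {G}.

Fixpoint eval G (M : Lstr G) (v : nat -> M) (t : term) : M :=
  match t with
  | TVar n => v n
  | TEps => s_eps M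
  | TMeet t1 t2 => s_meet (eval v t1) (eval v t2)
  | TPred t1 => s_pred (eval v t1)
  end.

Definition upd (T : Type) (v : nat -> T) (n : nat) (a : T) : nat -> T :=
  fun k => if k == n then a else v k.

Fixpoint sat G (M : Lstr G) (v : nat -> M) (f : formula G) : Prop :=
  match f with
  | FFalse => False
  | FEq t1 t2 => eval v t1 = eval v t2
  | FLe t1 t2 => s_le (eval v t1) (eval v t2)
  | FP s t => s_P s (eval v t)
  | FNot f1 => ~ sat v f1
  | FAnd f1 f2 => sat v f1 /\ sat v f2
  | FOr f1 f2 => sat v f1 \/ sat v f2
  | FImp f1 f2 => sat v f1 -> sat v f2
  | FAll n f1 => forall a : M, sat (upd v n a) f1
  | FEx n f1 => exists a : M, sat (upd v n a) f1
  end.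

Fixpoint fvt (t : term) : seq nat :=
  match t with
  | TVar n => [:: n]
  | TEps => [::]
  | TMeet t1 t2 => fvt t1 ++ fvt t2
  | TPred t1 => fvt t1
  end.

Fixpoint fv G (f : formula G) : seq nat :=
  match f with
  | FFalse => [::]
  | FEq t1 t2 | FLe t1 t2 => fvt t1 ++ fvt t2
  | FP _ t => fvt t
  | FNot f1 => fv f1
  | FAnd f1 f2 | FOr f1 f2 | FImp f1 f2 => fv f1 ++ fv f2
  | FAll n f1 | FEx n f1 => [seq k <- fv f1 | k != n]
  end.

Fixpoint qfree G (f : formula G) : bool :=
  match f with
  | FFalse | FEq _ _ | FLe _ _ | FP _ _ => true
  | FNot f1 => qfree f1
  | FAnd f1 f2 | FOr f1 f2 | FImp f1 f2 => qfree f1 && qfree f2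
  | FAll _ _ | FEx _ _ => false
  end.

Definition sentence G (f : formula G) : bool := fv f == [::].

Definition theory G := formula G -> Prop.

Definition Th G (M : Lstr G) : theory G :=
  fun f => sentence f /\ forall v : nat -> M, sat v f.

Definition models G (M : Lstr G) (T : theory G) : Prop :=
  forall f, T f -> forall v : nat -> M, sat v f.

Definition Liso G (M N : Lstr G) : Prop :=
  exists h : M -> N,
    bijective h /\
    h (s_eps M) = s_eps N /\
    (forall x y, h (s_meet x y) = s_meet (h x) (h y)) /\
    (forall x, h (s_pred x) = s_pred (h x)) /\
    (forall x y, s_le x y <-> s_le (h x) (h y)) /\
    (forall s x, s_P s x <-> s_P s (h x)).

Definition countably_infinite (T : Type) : Prop :=
  exists f : nat -> T, bijective f.

Definition aleph0_categorical G (T : theory G) : Prop :=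
  forall M N : Lstr G, models M T -> models N T ->
    countably_infinite M -> countably_infinite N -> Liso M N.

Definition has_QE G (T : theory G) : Prop :=
  forall f : formula G, exists g : formula G,
    qfree g /\ {subset fv g <= fv f} /\
    forall M : Lstr G, models M T -> forall v : nat -> M, sat v f <-> sat v g.

(* Main.v *)
Require Import Defs.
From mathcomp Require Import all_boot zify.
From Stdlib Require Import Classical ClassicalEpsilon.
Set Implicit Arguments. Unset Strict Implicit. Unset Printing Implicit Defensive.

Lemma eval_ext G (M : Lstr G) (v w : nat -> M) t :
  {in fvt t, v =1 w} -> eval v t = eval w t.
Proof.
elim: t => [n | | t1 IH1 t2 IH2 | t IH] /= H.
- by apply: H; rewrite inE.
- by [].
- have e1 : {in fvt t1, v =1 w} by move=> x hx; apply: H; rewrite mem_cat hx.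
  have e2 : {in fvt t2, v =1 w} by move=> x hx; apply: H; rewrite mem_cat hx orbT.
  by rewrite IH1 // IH2.
- by rewrite IH.
Qed.

Lemma sat_coinc G (M : Lstr G) (f : formula G) (v w : nat -> M) :
  {in fv f, v =1 w} -> (sat v f <-> sat w f).
Proof.
elim: f v w => [|t1 t2|t1 t2|s t|f IH|f1 IH1 f2 IH2|f1 IH1 f2 IH2|f1 IH1 f2 IH2
  |n f IH|n f IH] v w /= H.
- by [].
- by rewrite !(@eval_ext _ _ v w) // => x hx; apply: H; rewrite mem_cat hx ?orbT.
- by rewrite !(@eval_ext _ _ v w) // => x hx; apply: H; rewrite mem_cat hx ?orbT.
- by rewrite (@eval_ext _ _ v w).
- by rewrite (IH v w).
- have h1 := IH1 v w; have h2 := IH2 v w.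
  have e1 : {in fv f1, v =1 w} by move=> x hx; apply: H; rewrite mem_cat hx.
  have e2 : {in fv f2, v =1 w} by move=> x hx; apply: H; rewrite mem_cat hx orbT.
  by rewrite (h1 e1) (h2 e2).
- have e1 : {in fv f1, v =1 w} by move=> x hx; apply: H; rewrite mem_cat hx.
  have e2 : {in fv f2, v =1 w} by move=> x hx; apply: H; rewrite mem_cat hx orbT.
  by rewrite (IH1 v w e1) (IH2 v w e2).
- have e1 : {in fv f1, v =1 w} by move=> x hx; apply: H; rewrite mem_cat hx.
  have e2 : {in fv f2, v =1 w} by move=> x hx; apply: H; rewrite mem_cat hx orbT.
  by rewrite (IH1 v w e1) (IH2 v w e2).
- split=> h a; [apply/(IH (upd v n a))|apply/(IH _ (upd w n a))]; try exact: h;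
  move=> x hx; rewrite /upd; case: eqP => // /eqP xn; apply: H;
  by rewrite mem_filter xn.
- split=> -[a h]; exists a; [apply/(IH (upd v n a))|apply/(IH _ (upd w n a))];
  try exact: h; move=> x hx; rewrite /upd; case: eqP => // /eqP xn; apply: H;
  by rewrite mem_filter xn.
Qed.

Fixpoint closeAll G (X : seq nat) (f : formula G) : formula G :=
  if X is n :: X' then FAll n (closeAll X' f) else f.

Lemma fv_closeAll G X (f : formula G) k :
  (k \in fv (closeAll X f)) = (k \in fv f) && (k \notin X).
Proof.
elim: X => [|n X IH] /=; first by rewrite andbT.
by rewrite mem_filter IH inE negb_or; case: (k \in fv f); case: (k == n).
Qed.

Lemma sat_closeAll G (M : Lstr G) X (f : formula G) :
  (forall v : nat -> M, sat v (closeAll X f)) <-> (forall v : nat -> M, sat v f).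
Proof.
elim: X => [|n X IH] //=; split.
- move=> h; apply: (proj1 IH) => v; have := h v (v n).
  move/(sat_coinc (v:=upd v n (v n)) (w:=v)); apply => x _; rewrite /upd; by case: eqP => [->|].
- by move=> h v a; apply: (proj2 IH h).
Qed.

Lemma transfer G (M : Lstr G) lam (HG : tree_plan G lam) (f : formula G) :
  models M (Th (Gomega HG)) ->
  (forall v, sat (M := Gomega HG) v f) -> forall v : nat -> M, sat v f.
Proof.
move=> hM h; apply: (proj1 (sat_closeAll M (fv f) f)); apply: hM; split.
- apply/eqP; case E: (fv (closeAll (fv f) f)) => [|k s] //.
  have : k \in fv (closeAll (fv f) f) by rewrite E inE eqxx.
  by rewrite fv_closeAll; case: (k \in fv f).
- by apply: (proj2 (sat_closeAll _ (fv f) f)).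
Qed.

Definition tsw (a b x : nat) := if x == a then b else if x == b then a else x.
Lemma tswK a b : involutive (tsw a b).
Proof.
move=> x; rewrite /tsw.
case: (eqVneq x a) => [->|xa]; first by rewrite eqxx; case: eqP.
case: (eqVneq x b) => [->|xb]; first by rewrite eqxx.
by rewrite (negPf xa) (negPf xb).
Qed.

Fixpoint pperm (L : seq (nat * nat)) : nat -> nat :=
  if L is p :: L' then fun x => tsw (pperm L' p.1) p.2 (pperm L' x) else id.
Fixpoint pinv (L : seq (nat * nat)) : nat -> nat :=
  if L is p :: L' then fun x => pinv L' (tsw (pperm L' p.1) p.2 x) else id.

Lemma ppermK L : cancel (pperm L) (pinv L).
Proof. by elim: L => [|p L IH] x //=; rewrite tswK IH. Qed.
Lemma pinvK L : cancel (pinv L) (pperm L).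
Proof. by elim: L => [|p L IH] x //=; rewrite IH tswK. Qed.

Definition consistent (L : seq (nat * nat)) :=
  forall p q, p \in L -> q \in L -> (p.1 == q.1) = (p.2 == q.2).

Lemma pperm_ext L : consistent L -> forall p, p \in L -> pperm L p.1 = p.2.
Proof.
elim: L => [|q L IH] hc p //=.
have hc' : consistent L by move=> p1 p2 h1 h2; apply: hc; rewrite inE ?h1 ?h2 orbT.
rewrite inE => /orP[/eqP ->|hp]; first by rewrite /tsw eqxx.
have IHp := IH hc' p hp; rewrite IHp.
have hq := hc p q; rewrite inE hp orbT inE eqxx in hq; have {}hq := hq erefl erefl.
case: (eqVneq p.2 q.2) => [e|ne].
  have e1 : p.1 = q.1 by apply/eqP; rewrite hq e eqxx.
  by rewrite -e1 IHp /tsw eqxx e.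
have n1 : p.1 != q.1 by rewrite hq.
have : pperm L p.1 != pperm L q.1.
  by apply: contra n1 => /eqP /(can_inj (ppermK L)) ->.
rewrite IHp /tsw eq_sym => /negPf ->; by rewrite (negPf ne).
Qed.

Definition E := (nat * option nat)%type.
Definition e0 : E := (0, None).

Fixpoint hmap (r : seq E -> nat -> nat -> nat) (c : seq E) (y : seq E) : seq E :=
  if y is a :: y' then (a.1, omap (r c a.1) a.2) :: hmap r (rcons c a) y' else [::].

Fixpoint ginv (ri : seq E -> nat -> nat -> nat) (c : seq E) (z : seq E) : seq E :=
  if z is b :: z' then
    let a := (b.1, omap (ri c b.1) b.2) in a :: ginv ri (rcons c a) z'
  else [::].

Lemma hmapK r ri (K : forall c i, cancel (r c i) (ri c i)) c y :
  ginv ri c (hmap r c y) = y.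
Proof.
elim: y c => [|[i t] y IH] c //=.
have -> : omap (ri c i) (omap (r c i) t) = t by case: t => //= m; rewrite K.
by rewrite IH.
Qed.

Lemma ginvK r ri (K : forall c i, cancel (ri c i) (r c i)) c z :
  hmap r c (ginv ri c z) = z.
Proof.
elim: z c => [|[i t] z IH] c //=.
have -> : omap (r c i) (omap (ri c i) t) = t by case: t => //= m; rewrite K.
by rewrite IH.
Qed.

Lemma size_hmap r c y : size (hmap r c y) = size y.
Proof. by elim: y c => [|a y IH] c //=; rewrite IH. Qed.

Lemma fst_hmap r c y : map fst (hmap r c y) = map fst y.
Proof. by elim: y c => [|a y IH] c //=; rewrite IH. Qed.

Lemma some_hmap r c y :
  map (fun p : E => isSome p.2) (hmap r c y) = map (fun p : E => isSome p.2) y.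
Proof. by elim: y c => [|[i [m|]] y IH] c //=; rewrite IH. Qed.

Lemma take_hmap r c y n : take n (hmap r c y) = hmap r c (take n y).
Proof. by elim: y c n => [|a y IH] c [|n] //=; rewrite IH. Qed.

Lemma hmap_rcons r c y a :
  hmap r c (rcons y a) = rcons (hmap r c y) (a.1, omap (r (c ++ y) a.1) a.2).
Proof.
elim: y c => [|b y IH] c /=; first by rewrite cats0.
by rewrite IH cat_rcons.
Qed.

Lemma hmap_inj1 (r : seq E -> nat -> nat -> nat) (I : forall c i, injective (r c i)) c (a b : E) :
  ((a.1, omap (r c a.1) a.2) == (b.1, omap (r c b.1) b.2)) = (a == b).
Proof.
case: a b => [i t] [j s] /=.
case: (eqVneq i j) => [<-|ne]; last first.
  apply/idP/idP => /eqP [] e; by rewrite e eqxx in ne.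
case: t s => [m|] [n|] //=; apply/idP/idP => /eqP [] // e.
- by move/I: e => ->.
- by rewrite e.
Qed.

Lemma lcp_hmap (r : seq E -> nat -> nat -> nat) (I : forall c i, injective (r c i)) c x y :
  lcp (hmap r c x) (hmap r c y) = hmap r c (lcp x y).
Proof.
elim: x c y => [|a x IH] c [|b y] //=.
rewrite hmap_inj1 //; case: eqP => [->|] //=.
by rewrite IH.
Qed.

Lemma prefix_hmap (r : seq E -> nat -> nat -> nat) (I : forall c i, injective (r c i)) c x y :
  prefix (hmap r c x) (hmap r c y) = prefix x y.
Proof.
elim: x c y => [|a x IH] c [|b y] //=.
rewrite hmap_inj1 //; case: eqP => [->|] //=.
Qed.

Lemma sat_ext G (M : Lstr G) (f : formula G) (v w : nat -> M) :
  v =1 w -> (sat v f <-> sat w f).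
Proof. by move=> H; apply: sat_coinc => x _; apply: H. Qed.

Lemma sat_iso G (M N : Lstr G) (h : M -> N) :
  bijective h -> h (s_eps M) = s_eps N ->
  (forall x y, h (s_meet x y) = s_meet (h x) (h y)) ->
  (forall x, h (s_pred x) = s_pred (h x)) ->
  (forall x y, s_le x y <-> s_le (h x) (h y)) ->
  (forall s x, s_P s x <-> s_P s (h x)) ->
  forall (f : formula G) (v : nat -> M), sat v f <-> sat (fun n => h (v n)) f.
Proof.
move=> [g hK gK] he hm hp hl hP.
have ev : forall v t, h (eval v t) = eval (fun n => h (v n)) t.
  move=> v; elim => [n | | t1 IH1 t2 IH2 | t IH] //=.
  - by rewrite hm IH1 IH2.
  - by rewrite hp IH.
have hu : forall v n a, (fun k => h (upd v n a k)) =1 upd (fun k => h (v k)) n (h a).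
  by move=> v n a k; rewrite /upd; case: eqP.
elim => [|t1 t2|t1 t2|s t|f IH|f1 IH1 f2 IH2|f1 IH1 f2 IH2|f1 IH1 f2 IH2
  |n f IH|n f IH] v /=.
- by [].
- rewrite -!ev; split=> [->//|]; by move/(congr1 g); rewrite !hK.
- by rewrite -!ev.
- by rewrite -!ev.
- by rewrite IH.
- by rewrite IH1 IH2.
- by rewrite IH1 IH2.
- by rewrite IH1 IH2.
- split=> H b.
  + have := proj1 (IH _) (H (g b)); move/(sat_ext _ (hu v n (g b))).
    by rewrite gK.
  + apply/IH; apply/(sat_ext _ (hu v n b)); exact: H.
- split=> -[a H].
  + exists (h a); apply/(sat_ext _ (hu v n a)); exact/IH.
  + exists (g a); apply/IH; apply/(sat_ext _ (hu v n (g a))); by rewrite gK.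
Qed.

Lemma okpair_eq lam (x y : seq E) k :
  map fst x = map fst y ->
  map (fun p : E => isSome p.2) x = map (fun p : E => isSome p.2) y ->
  okpair lam x k = okpair lam y k.
Proof.
move=> hf hs.
have sz : size x = size y by rewrite -(size_map fst x) hf size_map.
have : isSome (nth e0 x k).2 = isSome (nth e0 y k).2.
  case: (ltnP k (size x)) => hk.
    rewrite -(nth_map e0 false (fun p : E => isSome p.2)) //.
    by rewrite hs (nth_map e0) // -sz.
  by rewrite !nth_default // -sz.
rewrite /okpair hf /e0.
by case: (nth (0, None) x k).2; case: (nth (0, None) y k).2.
Qed.

Lemma valid_hmap G lam r c y :
  valid G lam (hmap r c y) = valid G lam y.
Proof.
rewrite /valid fst_hmap size_hmap; congr andb; apply: eq_all => k.
by apply: okpair_eq; rewrite ?fst_hmap ?some_hmap.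
Qed.

Lemma gomega_auto G lam (HG : tree_plan G lam) (r ri : seq E -> nat -> nat -> nat)
  (K1 : forall c i, cancel (r c i) (ri c i)) (K2 : forall c i, cancel (ri c i) (r c i)) :
  exists h : gcar G lam -> gcar G lam,
    (forall x, sval (h x) = hmap r [::] (sval x)) /\
    forall (f : formula G) (v : nat -> Gomega HG), sat v f <-> sat (M := Gomega HG) (fun n => h (v n)) f.
Proof.
have vh : forall x : gcar G lam, valid G lam (hmap r [::] (sval x)).
  by move=> x; rewrite valid_hmap; exact: (svalP x).
have vg : forall x : gcar G lam, valid G lam (ginv ri [::] (sval x)).
  by move=> x; rewrite -(valid_hmap _ _ r [::]) ginvK //; exact: (svalP x).
pose h (x : gcar G lam) : gcar G lam := exist (fun y => valid G lam y) _ (vh x).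
pose g (x : gcar G lam) : gcar G lam := exist (fun y => valid G lam y) _ (vg x).
have I : forall c i, injective (r c i) by move=> c i; apply: can_inj (K1 c i).
exists h; split => // f v.
apply: (@sat_iso G (Gomega HG) (Gomega HG) h) => /=.
- by exists g => x; apply: val_inj => /=; rewrite ?hmapK ?ginvK.
- by apply: val_inj.
- by move=> x y; apply: val_inj => /=; rewrite lcp_hmap.
- by move=> x; apply: val_inj => /=; rewrite size_hmap take_hmap.
- by move=> x y; rewrite /g_le /= prefix_hmap.
- by move=> s x; rewrite /g_P /= fst_hmap.
Qed.

Definition Nb (G : seq (seq nat)) := (foldr maxn 0 (map size G)).+1.

Lemma size_Nb G s : s \in G -> size s < Nb G.
Proof.
rewrite /Nb ltnS; elim: G => [|t G IH] //=; rewrite inE => /orP[/eqP ->|h].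
  by rewrite leq_maxl.
by rewrite (leq_trans (IH h)) // leq_maxr.
Qed.

Lemma size_gcar G lam (x : gcar G lam) : size (sval x) < Nb G.
Proof.
case: x => y /= /andP[hy _]; by rewrite -(size_map fst) size_Nb.
Qed.

Lemma valid_okpair G lam y k : valid G lam y -> k < size y -> okpair lam y k.
Proof. by case/andP => _ /allP H hk; apply: H; rewrite mem_iota. Qed.

Lemma some_eq lam (y z : seq E) k : okpair lam y k -> okpair lam z k ->
  map fst y = map fst z -> isSome (nth e0 y k).2 = isSome (nth e0 z k).2.
Proof.
rewrite /okpair /e0 => + + e; rewrite e.
case: (nth (0, None) y k).2 => [m|]; case: (nth (0, None) z k).2 => [m'|] //;
by case: (lam _).
Qed.

Lemma take_succ_eq (s t : seq E) k : k < size s -> k < size t ->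
  (take k.+1 s == take k.+1 t) = (take k s == take k t) && (nth e0 s k == nth e0 t k).
Proof. by move=> hs ht; rewrite !(take_nth e0) // eqseq_rcons. Qed.

Lemma nth_fst (s : seq E) k : k < size s -> (nth e0 s k).1 = nth 0 (map fst s) k.
Proof. by move=> h; rewrite (nth_map e0). Qed.

Lemma homog_core G lam (HG : tree_plan G lam) (u v : nat -> gcar G lam) (X : seq nat)
  (HP : forall x, x \in X -> map fst (sval (u x)) = map fst (sval (v x)))
  (HE : forall x y k, x \in X -> y \in X ->
     (take k (sval (u x)) == take k (sval (u y))) =
     (take k (sval (v x)) == take k (sval (v y)))) :
  exists h : gcar G lam -> gcar G lam,
    (forall (f : formula G) (w : nat -> Gomega HG),
        sat w f <-> sat (M := Gomega HG) (fun n => h (w n)) f) /\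
    forall x, x \in X -> h (u x) = v x.
Proof.
have HS : forall x, x \in X -> size (sval (u x)) = size (sval (v x)).
  by move=> x hx; rewrite -(size_map fst) HP // size_map.
pose pairOf (c : seq E) (i x k : nat) : option (nat * nat) :=
  match (nth e0 (sval (u x)) k).2, (nth e0 (sval (v x)) k).2 with
  | Some m, Some m' =>
      if (take k (sval (u x)) == c) && ((nth e0 (sval (u x)) k).1 == i)
      then Some (m, m') else None
  | _, _ => None
  end.
pose L c i := flatten [seq pmap (pairOf c i x) (iota 0 (Nb G)) | x <- X].
have memL : forall c i p, p \in L c i -> exists x k, [/\ x \in X,
    k < size (sval (u x)), take k (sval (u x)) = c,
    nth e0 (sval (u x)) k = (i, Some p.1) & (nth e0 (sval (v x)) k).2 = Some p.2].
  move=> c i p /flatten_mapP [x hx]; rewrite mem_pmap => /mapP [k _].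
  rewrite /pairOf.
  case E1: (nth e0 (sval (u x)) k) => [i0 [m|]] //=.
  case E2: (nth e0 (sval (v x)) k).2 => [m'|] //.
  case: eqP => //= e; case: eqP => //= ei [] ->.
  exists x, k; split => //.
  - by rewrite ltnNge; apply/negP => hk; move: E1; rewrite nth_default.
  - by rewrite E1 ei.
have Lmem : forall x k i m m', x \in X -> k < size (sval (u x)) ->
    nth e0 (sval (u x)) k = (i, Some m) -> (nth e0 (sval (v x)) k).2 = Some m' ->
    (m, m') \in L (take k (sval (u x))) i.
  move=> x k i m m' hx hk e1 e2; apply/flatten_mapP; exists x => //.
  rewrite mem_pmap; apply/mapP; exists k.
    by rewrite mem_iota /= (leq_trans hk) // ltnW // size_gcar.
  by rewrite /pairOf e1 e2 /= !eqxx.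
have vnth : forall x k, x \in X -> k < size (sval (u x)) ->
    nth e0 (sval (v x)) k =
    ((nth e0 (sval (u x)) k).1, (nth e0 (sval (v x)) k).2).
  move=> x k hx hk; rewrite nth_fst // HP // -nth_fst -?HS //.
  by case: (nth e0 _ k).
have cons : forall c i, consistent (L c i).
  move=> c i p q /memL [x [k [hx hk ec ep eq]]] /memL [y [j [hy hj ec' ep' eq']]].
  have kj : k = j by rewrite -(size_takel (ltnW hk)) -(size_takel (ltnW hj)) ec ec'.
  subst j.
  have t1 : take k (sval (u x)) == take k (sval (u y)) by rewrite ec ec'.
  have t2 := t1; rewrite HE // in t2.
  have hkv : k < size (sval (v x)) by rewrite -HS.
  have hjv : k < size (sval (v y)) by rewrite -HS.
  have A : (p.1 == q.1) = (nth e0 (sval (u x)) k == nth e0 (sval (u y)) k).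
    by rewrite ep ep'; apply/idP/idP => [/eqP->|/eqP[]->].
  have B : (p.2 == q.2) = (nth e0 (sval (v x)) k == nth e0 (sval (v y)) k).
    rewrite (vnth x) // (vnth y) // ep ep' eq eq' /=.
    by apply/idP/idP => [/eqP->|/eqP[]->].
  rewrite A B -(andTb (_ == nth e0 (sval (u y)) k)) -t1 -take_succ_eq //.
  by rewrite HE // take_succ_eq // t2.
pose r c i := pperm (L c i); pose ri c i := pinv (L c i).
have [h [hv hs]] := gomega_auto HG (fun c i => ppermK (L c i)) (fun c i => pinvK (L c i)).
exists h; split => // x hx.
apply: val_inj; change (sval (h (u x)) = sval (v x)); rewrite hv.
suff: forall k, k <= size (sval (u x)) ->
    hmap r [::] (take k (sval (u x))) = take k (sval (v x)).
  by move/(_ (size (sval (u x))) (leqnn _)); rewrite take_size HS // take_size.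
elim => [|k IH] hk; first by rewrite !take0.
rewrite (take_nth e0) // hmap_rcons IH ?(ltnW hk) // (take_nth e0) -?HS //.
congr rcons; rewrite (vnth x) //=.
have okx := valid_okpair (svalP (u x)) hk.
have hkv : k < size (sval (v x)) by rewrite -HS.
have oky := valid_okpair (svalP (v x)) hkv.
have sm := some_eq okx oky (HP x hx).
case E1: (nth e0 (sval (u x)) k) => [i [m|]] /=; rewrite E1 in sm;
  case E2: (nth e0 (sval (v x)) k).2 => [m'|] //; rewrite E2 in sm => //.
have := pperm_ext (cons (take k (sval (u x))) i) (Lmem x k i m m' hx hk E1 E2).
by rewrite /r /= => ->.
Qed.

Definition predn (k : nat) (t : term) := iter k TPred t.

Lemma fvt_predn k x : fvt (predn k (TVar x)) = [:: x].
Proof. by elim: k. Qed.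

Fixpoint agreeL G (M : Lstr G) (u v : nat -> M) (l : seq (formula G)) : Prop :=
  if l is a :: l' then (sat u a <-> sat v a) /\ agreeL u v l' else True.

Lemma agreeL_cat G (M : Lstr G) (u v : nat -> M) l1 l2 :
  agreeL u v (l1 ++ l2) -> agreeL u v l1 /\ agreeL u v l2.
Proof. by elim: l1 => [|a l1 IH] //= [h1 /IH [h2 h3]]. Qed.

Lemma agreeL_flat G (M : Lstr G) (u v : nat -> M) (T : eqType) (F : T -> seq (formula G)) s :
  agreeL u v (flatten (map F s)) -> forall x, x \in s -> agreeL u v (F x).
Proof.
elim: s => [|y s IH] //= /agreeL_cat [h1 h2] x; rewrite inE => /orP[/eqP->//|].
exact: IH.
Qed.

Lemma agreeL_map G (M : Lstr G) (u v : nat -> M) (T : eqType) (F : T -> formula G) s :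
  agreeL u v (map F s) -> forall x, x \in s -> (sat u (F x) <-> sat v (F x)).
Proof.
elim: s => [|y s IH] //= [h1 h2] x; rewrite inE => /orP[/eqP->//|].
exact: IH.
Qed.

Definition sigG G : seq {s : seq nat | s \in G} := pmap insub G.

Definition atoms G (X : seq nat) : seq (formula G) :=
  flatten [seq [seq FP s (TVar x) | s <- sigG G] | x <- X] ++
  flatten [seq flatten [seq flatten [seq
    [seq FEq G (predn a (TVar x)) (predn b (TVar y)) | b <- iota 0 (Nb G)]
    | a <- iota 0 (Nb G)] | y <- X] | x <- X].

Lemma eval_predn G lam (HG : tree_plan G lam) (w : nat -> Gomega HG) k t :
  sval (eval w (predn k t)) =
  take (size (sval (eval w t)) - k) (sval (eval w t)).
Proof.
elim: k => [|k IH] /=; first by rewrite subn0 take_size.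
rewrite -/(predn k t) IH size_takel ?leq_subr // take_takel ?leq_pred //.
by rewrite subnS.
Qed.

Lemma takeSS (s : seq E) k : take (size s - (size s - k)) s = take k s.
Proof.
case: (leqP k (size s)) => h; first by rewrite subKn.
rewrite (_ : size s - (size s - k) = size s); last by lia.
by rewrite take_size take_oversize // ltnW.
Qed.

Lemma homog G lam (HG : tree_plan G lam) (u v : nat -> Gomega HG) X :
  agreeL u v (atoms G X) ->
  exists h : gcar G lam -> gcar G lam,
    (forall (f : formula G) (w : nat -> Gomega HG),
        sat w f <-> sat (M := Gomega HG) (fun n => h (w n)) f) /\
    forall x, x \in X -> h (u x) = v x.
Proof.
move/agreeL_cat => [AP AE].
have HP : forall x, x \in X -> map fst (sval (u x)) = map fst (sval (v x)).
  move=> x hx; have := agreeL_flat AP hx.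
  have hG : map fst (sval (u x)) \in G by case/andP: (svalP (u x)).
  pose s0 : {s : seq nat | s \in G} := exist (fun s => s \in G) _ hG.
  have hs0 : s0 \in sigG G by rewrite /sigG mem_pmap_sub.
  move/agreeL_map => /(_ s0 hs0) /= [h1 _].
  by rewrite /g_P /= in h1; rewrite h1.
apply: homog_core => // x y k hx hy.
have HS : forall z, z \in X -> size (sval (u z)) = size (sval (v z)).
  by move=> z hz; rewrite -(size_map fst) HP // size_map.
have ha : size (sval (u x)) - k \in iota 0 (Nb G).
  by rewrite mem_iota /= (leq_ltn_trans (leq_subr _ _)) // size_gcar.
have hb : size (sval (u y)) - k \in iota 0 (Nb G).
  by rewrite mem_iota /= (leq_ltn_trans (leq_subr _ _)) // size_gcar.
have := agreeL_flat AE hx => /agreeL_flat /(_ _ hy) /agreeL_flat /(_ _ ha).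
move/agreeL_map => /(_ _ hb) /= [h1 h2].
have e : forall (w : nat -> Gomega HG) a b,
    (eval w (predn a (TVar x)) = eval w (predn b (TVar y))) <->
    (take (size (sval (w x)) - a) (sval (w x)) =
     take (size (sval (w y)) - b) (sval (w y))).
  move=> w a b; have := eval_predn w a (TVar x); have := eval_predn w b (TVar y).
  rewrite /= => e2 e1; split => [h|h]; first by rewrite -e1 -e2 h.
  by apply: val_inj; change (sval (eval w (predn a (TVar x))) = sval (eval w (predn b (TVar y)))); rewrite e1 e2.
rewrite !e !takeSS in h1 h2.
rewrite (HS x) // (HS y) // !takeSS in h1 h2.
by apply/eqP/eqP.
Qed.

Definition FTrue G : formula G := FNot FFalse.
Fixpoint Dform G (l : seq (formula G)) (bs : seq bool) : formula G :=
  match l, bs with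
  | a :: l', b :: bs' => FAnd (if b then a else FNot a) (Dform l' bs')
  | _, _ => FTrue G
  end.

Lemma Dform_ex G (M : Lstr G) (w : nat -> M) l :
  exists bs, size bs = size l /\ sat w (Dform l bs).
Proof.
elim: l => [|a l IH]; first by exists [::]; split => //= [].
have [bs [hs hb]] := IH.
case: (classic (sat w a)) => h; [exists (true :: bs) | exists (false :: bs)];
  by split => //=; rewrite hs.
Qed.

Lemma Dform_agree G (M : Lstr G) (u v : nat -> M) l bs :
  size bs = size l -> sat u (Dform l bs) -> sat v (Dform l bs) -> agreeL u v l.
Proof.
elim: l bs => [|a l IH] [|b bs] //= hs.
have hs' : size bs = size l by case: hs.
move=> [h1 h2] [h3 h4]; split; last exact: (IH bs).
by case: b h1 h3 => /=; tauto.
Qed.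

Fixpoint allbs n : seq (seq bool) :=
  if n is n'.+1 then [seq b :: s | b <- [:: true; false], s <- allbs n'] else [:: [::]].

Lemma mem_allbs bs : bs \in allbs (size bs).
Proof.
elim: bs => [|b bs IH] //=.
by case: b; rewrite !mem_cat (map_f (cons _) IH) ?orbT.
Qed.

Lemma size_allbs n bs : bs \in allbs n -> size bs = n.
Proof.
elim: n bs => [|n IH] bs /=; first by rewrite inE => /eqP->.
rewrite !mem_cat => /orP [/mapP [s hs ->]|/orP [/mapP [s hs ->]|//]] /=;
  by rewrite (IH _ hs).
Qed.

Lemma definable G lam (HG : tree_plan G lam) (f : formula G) (X : seq nat) bs :
  {subset fv f <= X} -> size bs = size (atoms G X) ->
  (forall w : nat -> Gomega HG, sat w (FImp (Dform (atoms G X) bs) f)) \/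
  (forall w : nat -> Gomega HG, sat w (FImp (Dform (atoms G X) bs) (FNot f))).
Proof.
move=> hfv hs.
case: (classic (exists u : nat -> Gomega HG, sat u (Dform (atoms G X) bs) /\ sat u f)).
- move=> [u [hu hf]]; left => w hw.
  change (sat w (Dform (atoms G X) bs)) in hw.
  have [h [hsat hx]] := homog (Dform_agree hs hu hw).
  have := proj1 (hsat f u) hf.
  move/(sat_coinc (M := Gomega HG) (v := fun n => h (u n)) (w := w)); apply => x /hfv hxX.
  exact: hx.
- move=> H; right => w hw hf; apply: H; exists w; split => //.
Qed.

Lemma all_flatmap (T : eqType) (A : Type) (P : pred A) (F : T -> seq A) s :
  (forall x, x \in s -> all P (F x)) -> all P (flatten (map F s)).
Proof.
elim: s => [|y s IH] //= H; rewrite all_cat H ?inE ?eqxx //= IH // => x hx.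
by apply: H; rewrite inE hx orbT.
Qed.

Definition okX G (X : seq nat) (a : formula G) := qfree a && all (fun k => k \in X) (fv a).

Lemma atoms_ok G X : all (okX X) (atoms G X).
Proof.
rewrite all_cat; apply/andP; split; apply: all_flatmap => x hx.
- by rewrite all_map; apply/allP => s _; rewrite /okX /= hx.
- apply: all_flatmap => y hy; apply: all_flatmap => a _.
  by rewrite all_map; apply/allP => b _; rewrite /okX /= !fvt_predn /= hx hy.
Qed.

Lemma Dform_ok G X (l : seq (formula G)) bs : all (okX X) l -> okX X (Dform l bs).
Proof.
elim: l bs => [|a l IH] [|b bs] //= /andP [ha hl].
have := IH bs hl; move: ha; rewrite /okX /=.
case: b => /= /andP [q1 f1] /andP [q2 f2]; by rewrite q1 q2 all_cat f1 f2.
Qed.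

Fixpoint Dis G (l : seq (formula G)) : formula G :=
  if l is a :: l' then FOr a (Dis l') else FFalse.

Lemma sat_Dis G (M : Lstr G) (w : nat -> M) (T : eqType) (F : T -> formula G) s :
  sat w (Dis (map F s)) <-> exists2 x, x \in s & sat w (F x).
Proof.
elim: s => [|y s IH] /=; first by split => // -[].
split.
- case=> [h|/IH [x hx h]]; first by exists y; rewrite ?inE ?eqxx.
  by exists x; rewrite // inE hx orbT.
- move=> [x]; rewrite inE => /orP [/eqP -> h|hx h]; first by left.
  by right; apply/IH; exists x.
Qed.

Lemma Dis_ok G X (l : seq (formula G)) : all (okX X) l -> okX X (Dis l).
Proof.
elim: l => [|a l IH] //= /andP [ha hl]; have := IH hl; move: ha.
by rewrite /okX /= => /andP [q1 f1] /andP [q2 f2]; rewrite q1 q2 all_cat f1 f2.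
Qed.

Definition pb (P : Prop) : bool := if excluded_middle_informative P then true else false.
Lemma pbP P : pb P <-> P.
Proof. by rewrite /pb; case: excluded_middle_informative. Qed.

Lemma QE G lam (HG : tree_plan G lam) : has_QE (Th (Gomega HG)).
Proof.
move=> f.
pose X := fv f; pose D := Dform (atoms G X).
pose S := [seq bs <- allbs (size (atoms G X)) |
            pb (forall w : nat -> Gomega HG, sat w (FImp (D bs) f))].
exists (Dis (map D S)).
have ok : okX X (Dis (map D S)).
  apply: Dis_ok; rewrite all_map; apply/allP => bs _ /=.
  apply: Dform_ok; exact: atoms_ok.
case/andP: ok => q fvs; split => //; split; first by move=> k; move/allP: fvs; apply.
move=> M hM v; split.
- move=> hf; have [bs [hs hb]] := Dform_ex v (atoms G X).
  apply/sat_Dis; exists bs => //.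
  rewrite mem_filter -hs mem_allbs andbT.
  case: (@definable G lam HG f X bs (fun k (h : k \in fv f) => h) hs) => H.
    by apply/pbP.
  by exfalso; apply: (transfer hM H v hb hf).
- case/sat_Dis => bs; rewrite mem_filter => /andP [/pbP H _] hb.
  exact: (transfer hM H v hb).
Qed.

Definition Eqv G (M N : Lstr G) (vm : nat -> M) (vn : nat -> N) n :=
  forall f : formula G, {subset fv f <= iota 0 n} -> (sat vm f <-> sat vn f).

Lemma Eqv_sym G (M N : Lstr G) (vm : nat -> M) (vn : nat -> N) n :
  Eqv vm vn n -> Eqv vn vm n.
Proof. by move=> H f hf; split => /(H f hf). Qed.

Lemma Eqv_step G lam (HG : tree_plan G lam) (M N : Lstr G)
  (hM : models M (Th (Gomega HG))) (hN : models N (Th (Gomega HG)))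
  (vm : nat -> M) (vn : nat -> N) n bs (a : M) (b : N) :
  size bs = size (atoms G (iota 0 n.+1)) ->
  sat (upd vm n a) (Dform (atoms G (iota 0 n.+1)) bs) ->
  sat (upd vn n b) (Dform (atoms G (iota 0 n.+1)) bs) ->
  Eqv (upd vm n a) (upd vn n b) n.+1.
Proof.
move=> hs h1 h2 f hf.
case: (@definable G lam HG f (iota 0 n.+1) bs hf hs) => H.
- have := transfer hM H (upd vm n a) h1; have := transfer hN H (upd vn n b) h2.
  by move=> p q; split.
- have := transfer hM H (upd vm n a) h1; have := transfer hN H (upd vn n b) h2.
  by move=> p q; split.
Qed.

Lemma forth G lam (HG : tree_plan G lam) (M N : Lstr G)
  (hM : models M (Th (Gomega HG))) (hN : models N (Th (Gomega HG)))
  (vm : nat -> M) (vn : nat -> N) n :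
  Eqv vm vn n -> forall a : M, exists b : N, Eqv (upd vm n a) (upd vn n b) n.+1.
Proof.
move=> E a.
have [bs [hs hb]] := Dform_ex (upd vm n a) (atoms G (iota 0 n.+1)).
have ok := Dform_ok bs (atoms_ok G (iota 0 n.+1)).
have hfv : {subset fv (FEx n (Dform (atoms G (iota 0 n.+1)) bs)) <= iota 0 n}.
  move=> k /=; rewrite mem_filter => /andP [kn hk].
  case/andP: ok => _ /allP /(_ k hk); rewrite !mem_iota /= => hk'.
  by move: kn hk'; rewrite !add0n ltnS leq_eqVlt => /negPf ->.
have : sat vm (FEx n (Dform (atoms G (iota 0 n.+1)) bs)) by exists a.
move/(E _ hfv) => [b hb'].
exists b; exact: (Eqv_step hM hN hs hb hb').
Qed.

Lemma Eqv0 G lam (HG : tree_plan G lam) (M N : Lstr G)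
  (hM : models M (Th (Gomega HG))) (hN : models N (Th (Gomega HG)))
  (vm : nat -> M) (vn : nat -> N) : Eqv vm vn 0.
Proof.
move=> f hf.
case: (@definable G lam HG f [::] [::] hf erefl) => H.
- have := transfer hM H vm; have := transfer hN H vn.
  by move=> p q; split => _; [apply: p|apply: q].
- have := transfer hM H vm; have := transfer hN H vn.
  by move=> p q; split => h; [case: (q (fun x => x))|case: (p (fun x => x))].
Qed.

Definition chooseB G (M N : Lstr G) (d : N) (vm : nat -> M) (vn : nat -> N) n (a : M) : N :=
  epsilon (inhabits d) (fun b => Eqv (upd vm n a) (upd vn n b) n.+1).

Fixpoint stage G (M N : Lstr G) (eM : nat -> M) (eN : nat -> N) (k : nat)
  : (nat -> M) * (nat -> N) :=
  match k with
  | 0 => (fun _ => eM 0, fun _ => eN 0)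
  | k'.+1 =>
    let (vm, vn) := stage eM eN k' in
    if odd k' then
      let b := eN k'./2 in (upd vm k' (chooseB (eM 0) vn vm k' b), upd vn k' b)
    else
      let a := eM k'./2 in (upd vm k' a, upd vn k' (chooseB (eN 0) vm vn k' a))
  end.

Lemma upd_eq (T : Type) (v : nat -> T) n a : upd v n a n = a.
Proof. by rewrite /upd eqxx. Qed.

Lemma max_mem (s : seq nat) x : x \in s -> x <= foldr maxn 0 s.
Proof.
elim: s => [|y s IH] //=; rewrite inE => /orP [/eqP ->|h]; first by rewrite leq_maxl.
by rewrite (leq_trans (IH h)) // leq_maxr.
Qed.

Lemma categ G lam (HG : tree_plan G lam) : aleph0_categorical (Th (Gomega HG)).
Proof.
move=> M N hM hN [eM [gM eMK gMK]] [eN [gN eNK gNK]].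
pose st := stage eM eN.
have inv : forall k, Eqv (st k).1 (st k).2 k.
  elim => [|k IH]; first exact: (Eqv0 hM hN).
  rewrite /st /=; rewrite -/(st k); case: (st k) IH => vm vn /= IH.
  case: (odd k) => /=.
  - apply: Eqv_sym; rewrite /chooseB.
    apply: (epsilon_spec (inhabits (eM 0)) (fun a => Eqv (upd vn k (eN k./2)) (upd vm k a) k.+1)).
    exact: (forth hN hM (Eqv_sym IH)).
  - rewrite /chooseB.
    apply: (epsilon_spec (inhabits (eN 0)) (fun b => Eqv (upd vm k (eM k./2)) (upd vn k b) k.+1)).
    exact: (forth hM hN IH).
pose am i := (st i.+1).1 i; pose bn i := (st i.+1).2 i.
have stab : forall k i, i < k -> (st k).1 i = am i /\ (st k).2 i = bn i.
  elim => [|k IH] i // hi.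
  case: (eqVneq i k) => [->|ne]; first by [].
  have hik : i < k by rewrite ltn_neqAle ne -ltnS.
  have [e1 e2] := IH i hik; rewrite -e1 -e2 /st /=; rewrite -/(st k).
  by case: (st k) => vm vn; case: (odd k); rewrite /= /upd (negPf ne).
have all : forall f : formula G, sat am f <-> sat bn f.
  move=> f; pose k := (foldr maxn 0 (fv f)).+1.
  have hk : {subset fv f <= iota 0 k}.
    by move=> x hx; rewrite mem_iota /= add0n ltnS max_mem.
  have c1 : {in fv f, am =1 (st k).1}.
    by move=> x /hk; rewrite mem_iota /= add0n => /stab [-> _].
  have c2 : {in fv f, bn =1 (st k).2}.
    by move=> x /hk; rewrite mem_iota /= add0n => /stab [_ ->].
  rewrite (sat_coinc c1) (sat_coinc c2); exact: inv.
have amE : forall i, am i.*2 = eM i.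
  move=> i; rewrite /am /st; move: (odd_double i) (doubleK i).
  move: i.*2 => k hk hk2; rewrite -[in RHS]hk2 /=.
  by case: (stage eM eN k) => vm vn; rewrite hk /= upd_eq.
have bnE : forall i, bn i.*2.+1 = eN i.
  move=> i; rewrite /bn /st.
  have hk : odd i.*2.+1 by rewrite /= odd_double.
  have hk2 : (i.*2.+1)./2 = i by rewrite -[(i.*2.+1)./2]/(uphalf i.*2) uphalf_double.
  move: hk hk2; move: i.*2.+1 => k hk hk2; rewrite -[in RHS]hk2 /=.
  by case: (stage eM eN k) => vm vn; rewrite hk /= upd_eq.
pose h (x : M) : N := bn (gM x).*2.
pose g (y : N) : M := am (gN y).*2.+1.
have amI : forall x, am (gM x).*2 = x by move=> x; rewrite amE gMK.
have bnI : forall y, bn (gN y).*2.+1 = y by move=> y; rewrite bnE gNK.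
have eqab : forall i j, am i = am j <-> bn i = bn j.
  by move=> i j; exact: (all (FEq G (TVar i) (TVar j))).
have hE : forall i, h (am i) = bn i by move=> i; apply/eqab; rewrite amI.
have gE : forall i, g (bn i) = am i by move=> i; apply/eqab; rewrite bnI.
exists h; split; [|split; [|split; [|split; [|split]]]].
- exists g => x; first by rewrite /h gE amI.
  by rewrite /g hE bnI.
- have := proj1 (all (FEq G (TVar (gM (s_eps M)).*2) TEps)); rewrite /= amI.
  by apply.
- move=> x y.
  have := proj1 (all (FEq G (TVar (gM (s_meet x y)).*2)
                     (TMeet (TVar (gM x).*2) (TVar (gM y).*2)))).
  by rewrite /= !amI; apply.
- move=> x.
  have := proj1 (all (FEq G (TVar (gM (s_pred x)).*2) (TPred (TVar (gM x).*2)))).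
  by rewrite /= !amI; apply.
- move=> x y.
  have := all (FLe G (TVar (gM x).*2) (TVar (gM y).*2)).
  by rewrite /= !amI.
- move=> s x.
  have := all (FP s (TVar (gM x).*2)).
  by rewrite /= !amI.
Qed.

Unset Implicit Arguments.

Theorem mainTheorem4 (G : seq (seq nat)) (lam : seq nat -> lab)
  (HG : tree_plan G lam) :
  aleph0_categorical (Th (Gomega HG)) /\ has_QE (Th (Gomega HG)).
Proof. split; [exact: categ | exact: QE]. Qed.
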